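(* Let $\Gamma=(V,E)$ be a simple graph of order $n$ and maximum degree $\Delta$. Then the global defensive alliance number of $\Gamma$ satisfies $$\gamma_{a}(\Gamma)\ge \left\lceil \frac{2n}{\Delta+3}\right\rceil$$ and the global strong defensive alliance number of $\Gamma$ satisfies $$\gamma_{\hat{a}}(\Gamma)\ge \left\lceil \frac{n}{\left\lfloor\frac{\Delta}{2}\right\rfloor+1}\right\rceil.$$
   Context: For $S\subseteq V$ and $v\in V$, $N_S(v)=\{u\in S: u\sim v\}$ and $N_{V\setminus S}(v)=\{u\in V\setminus S: u\sim v\}$. A nonempty set $S\subseteq V$ is a defensive alliance if $|N_S(v)|+1\ge |N_{V\setminus S}(v)|$ for every $v\in S$, and a strong defensive alliance if $|N_S(v)|\ge |N_{V\setminus S}(v)|$ for every $v\in S$. A (strong) defensive alliance is global if it is a dominating set, i.e. every vertex of $V\setminus S$ is adjacent to some vertex of $S$. $\gamma_a(\Gamma)$ (resp. $\gamma_{\hat a}(\Gamma)$) is the minimum cardinality of a global defensive (resp. global strong defensive) alliance. *)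

(* Defs.v *)
From mathcomp Require Import all_boot all_order.
Set Implicit Arguments. Unset Strict Implicit. Unset Printing Implicit Defensive.

Definition simple_graph (T : finType) (e : rel T) : Prop :=
  symmetric e /\ irreflexive e.

Section Alliances.
Variables (T : finType) (e : rel T).

Definition nbhd_in (S : {set T}) (v : T) : {set T} := [set u in S | e u v].

Definition degree (v : T) : nat := #|[set u | e u v]|.

(* maximum degree Delta (0 for the empty graph) *)
Definition max_degree : nat := \max_(v : T) degree v.

Definition dominating (S : {set T}) : bool :=
  [forall v, (v \notin S) ==> [exists u in S, e u v]].

Definition defensive_alliance (S : {set T}) : bool :=
  (S != set0) &&
  [forall v in S, #|nbhd_in (~: S) v| <= #|nbhd_in S v| + 1].

Definition strong_defensive_alliance (S : {set T}) : bool :=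
  (S != set0) &&
  [forall v in S, #|nbhd_in (~: S) v| <= #|nbhd_in S v|].

Definition global_defensive_alliance (S : {set T}) : bool :=
  defensive_alliance S && dominating S.

Definition global_strong_defensive_alliance (S : {set T}) : bool :=
  strong_defensive_alliance S && dominating S.

(* gamma_a and gamma_{hat a}: minimum cardinality; (#|T| if no such set exists,
   which only happens for the empty graph, excluded in the theorem). *)
Definition gamma_a : nat :=
  \big[minn/#|T|]_(S : {set T} | global_defensive_alliance S) #|S|.

Definition gamma_hat_a : nat :=
  \big[minn/#|T|]_(S : {set T} | global_strong_defensive_alliance S) #|S|.

End Alliances.

Definition ceil_div (a b : nat) : nat := (a + b.-1) %/ b.

(* Main.v *)
Require Import Defs.
From mathcomp Require Import all_boot all_order.
From mathcomp Require Import zify.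

Lemma count_lemma (T : finType) (e : rel T) (S : {set T}) (k : nat) :
  symmetric e -> dominating e S ->
  (forall v, v \in S -> #|nbhd_in e (~: S) v| <= k) ->
  #|~: S| <= #|S| * k.
Proof.
move=> esym /forallP dom hk.
have E v : #|nbhd_in e (~: S) v| = \sum_(u in ~: S) (e u v : nat).
  rewrite -sum1_card (@eq_bigl _ _ _ _ _ _ (fun u => (u \in ~: S) && e u v)); last first.
    by move=> u; rewrite /nbhd_in inE.
  rewrite big_mkcondr /=; apply: eq_bigr => u _.
  by case: (e u v).
apply: (@leq_trans (\sum_(v in S) #|nbhd_in e (~: S) v|)); last first.
  rewrite -sum_nat_const; exact: leq_sum.
under eq_bigr do rewrite E.
rewrite exchange_big /= -sum1_card; apply: leq_sum => u.
rewrite inE => uS.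
have /existsP [v /andP [vS evu]] := implyP (dom u) uS.
rewrite (bigD1 v) //= esym evu; exact: leq_addr.
Qed.

Lemma deg_split (T : finType) (e : rel T) (S : {set T}) v :
  #|nbhd_in e (~: S) v| + #|nbhd_in e S v| <= max_degree e.
Proof.
apply: (@leq_trans (degree e v)); last by rewrite /max_degree; exact: (leq_bigmax v).
have e1 : nbhd_in e (~: S) v = [set u | e u v] :\: S.
  by apply/setP => u; rewrite !inE andbC.
have e2 : nbhd_in e S v = [set u | e u v] :&: S.
  by apply/setP => u; rewrite !inE andbC.
by rewrite /degree -(cardsID S [set u | e u v]) e1 e2 addnC.
Qed.

Lemma ceil_le a b s : 0 < b -> a <= s * b -> ceil_div a b <= s.
Proof.
move=> b0 h; rewrite /ceil_div -ltnS ltn_divLR //; lia.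
Qed.

Theorem theorem4 (T : finType) (e : rel T) :
  simple_graph e -> 0 < #|T| ->
  ceil_div (2 * #|T|) (max_degree e + 3) <= gamma_a e /\
  ceil_div #|T| ((max_degree e)./2 + 1) <= gamma_hat_a e.
Proof.
move=> [esym eirr] n0; set D := max_degree e.
have cS (S : {set T}) : #|S| + #|~: S| = #|T| by rewrite cardsC.
split.
- rewrite /gamma_a; elim/big_ind: _ => //.
  + apply: ceil_le; first by rewrite addn3.
    lia.
  + by move=> x y hx hy; rewrite leq_min hx hy.
  + move=> S /andP [/andP [_ /forall_inP al] dom].
    have h := @count_lemma T e S ((D.+1)./2) esym dom.
    have hk : forall v, v \in S -> #|nbhd_in e (~: S) v| <= (D.+1)./2.
      move=> v vS; rewrite geq_half_double -addnn.
      have := al v vS; have := deg_split _ e S v; rewrite -/D; lia.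
    have := h hk; have := cS S; have := odd_double_half D.+1.
    move=> h1 h2 h3; apply: ceil_le; first by rewrite addn3.
    rewrite -!muln2 in h1 *; lia.
- rewrite /gamma_hat_a; elim/big_ind: _ => //.
  + apply: ceil_le; first by rewrite addn1.
    lia.
  + by move=> x y hx hy; rewrite leq_min hx hy.
  + move=> S /andP [/andP [_ /forall_inP al] dom].
    have h := @count_lemma T e S (D./2) esym dom.
    have hk : forall v, v \in S -> #|nbhd_in e (~: S) v| <= D./2.
      move=> v vS; rewrite geq_half_double -addnn.
      have := al v vS; have := deg_split _ e S v; rewrite -/D; lia.
    have := h hk; have := cS S.
    move=> h2 h3; apply: ceil_le; first by rewrite addn1.
    lia.
Qed.
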